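(* Let $W$ be a neat, upward-restricted layered wheel. Then the class of finite induced subgraphs of $W$ has bounded twin-width.
   Context: A layered wheel is a countably infinite graph $W$ on the same vertex set as a countably infinite, locally finite rooted tree $T$ embedded in the plane, such that: (1) for every natural number $n$, the set $L_n$ of nodes at distance $n$ from the root induces in $W$ a finite path visiting $L_n$ in the left-to-right order of the embedding; edges inside layers are layer edges, forming $E_L$; (2) every edge not in $E_L$ joins two nodes in ancestor–descendant relation in $T$; (3) there is a finite bound on the length of paths in $T$ consisting only of degree-$2$ nodes of $T$. A node is its own ancestor and descendant. $W$ is neat if $T$ has no leaf; $W$ is upward-restricted if there is an integer $t$ such that for every node $v$ there is a set $X_v$ of at most $t$ ancestors of $v$ such that in $W-E_L$ every edge with exactly one endpoint among the descendants of $v$ has its other endpoint in $X_v$. Twin-width: a partition sequence of an $n$-vertex graph $G$ is a sequence $\mathcal P_n,\dots,\mathcal P_1$ of partitions of $V(G)$ where $\mathcal P_n$ is the partition into singletons and each $\mathcal P_i$ ($i<n$) is obtained from $\mathcal P_{i+1}$ by merging two parts. For a partition $\mathcal P$, the red graph $\mathcal R(\mathcal P)$ has vertex set $\mathcal P$ and an edge between distinct parts $P,P'$ whenever there are $u,v\in P$ and $u',v'\in P'$ (possibly $u=v$ or $u'=v'$) with $uu'\in E(G)$ and $vv'\notin E(G)$. The twin-width of $G$ is the least $d$ such that $G$ has a partition sequence all of whose red graphs have maximum degree at most $d$. *)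

(* Defs.v *)
From mathcomp Require Import all_boot.
Set Implicit Arguments. Unset Strict Implicit. Unset Printing Implicit Defensive.

(* Countably infinite, locally finite rooted trees embedded in the plane.    *)
(* A node is a pair (n, i): the i-th node (from the left, 0-based) of layer  *)
(* L_n (nodes at distance n from the root).  Layer n has [lsize n] nodes;    *)
(* [par n i] is the position in layer n of the parent of node (n.+1, i).     *)
(* The plane embedding is encoded by the left-to-right order of the layers,  *)
(* which must be compatible with the parent map (parents are monotone).      *)
Record ptree := PTree {
  lsize : nat -> nat;
  par : nat -> nat -> nat;
  lsize_root : lsize 0 = 1;
  lsize_pos : forall n, 0 < lsize n;           (* the tree is infinite *)
  par_lt : forall n i, i < lsize n.+1 -> par n i < lsize n;
  par_mono : forall n i j, i <= j -> j < lsize n.+1 -> par n i <= par n j }.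

Definition Node := (nat * nat)%type.

Definition valid (T : ptree) (v : Node) : bool := v.2 < lsize T v.1.

Fixpoint anc_pos (T : ptree) (n i k : nat) : nat :=
  match k with
  | 0 => i
  | k'.+1 => anc_pos T n.-1 (par T n.-1 i) k'
  end.

(* [is_anc T u v] : u is an ancestor of v (a node is its own ancestor) *)
Definition is_anc (T : ptree) (u v : Node) : bool :=
  (u.1 <= v.1) && (anc_pos T v.1 v.2 (v.1 - u.1) == u.2).

Definition tadj (T : ptree) (u v : Node) : bool :=
  ((v.1 == u.1.+1) && (par T u.1 v.2 == u.2)) ||
  ((u.1 == v.1.+1) && (par T v.1 u.2 == v.2)).

Definition nchildren (T : ptree) (v : Node) : nat :=
  count (fun j => par T v.1 j == v.2) (iota 0 (lsize T v.1.+1)).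

Definition tdeg (T : ptree) (v : Node) : nat := nchildren T v + (0 < v.1).

Record layered_wheel (T : ptree) (adj : rel Node) : Prop := {
  lw_support : forall u v, adj u v -> valid T u && valid T v;
  lw_sym : forall u v, adj u v = adj v u;
  lw_irr : forall v, ~~ adj v v;
  lw_layer : forall n i j, i < lsize T n -> j < lsize T n ->
      adj (n, i) (n, j) = (i.+1 == j) || (j.+1 == i);
  lw_anc : forall u v, adj u v -> u.1 != v.1 -> is_anc T u v || is_anc T v u;
  lw_deg2 : exists K, forall (x : Node) (s : seq Node),
      all (valid T) (x :: s) -> uniq (x :: s) -> path (tadj T) x s ->
      all (fun v => tdeg T v == 2) (x :: s) -> size s <= K }.

Definition neat (T : ptree) : Prop := forall v, valid T v -> 0 < nchildren T v.

(* upward-restricted; edges of W - E_L are the edges between distinct layers *)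
Definition upward_restricted (T : ptree) (adj : rel Node) : Prop :=
  exists t : nat, forall v, valid T v ->
    exists X : seq Node,
      [/\ size X <= t,
          all (fun x => valid T x && is_anc T x v) X &
          forall x y, adj x y -> x.1 != y.1 ->
            is_anc T v x -> ~~ is_anc T v y -> y \in X].

Definition merge_step (V : finType) (P Q : {set {set V}}) : Prop :=
  exists A B, [/\ A \in P, B \in P, A != B & Q = (A :|: B) |: (P :\ A :\ B)].

Definition red_edge (V : finType) (e : rel V) (A B : {set V}) : bool :=
  [exists u in A, exists v in A, exists u' in B, exists v' in B,
     e u u' && ~~ e v v'].

Definition red_maxdeg_le (V : finType) (e : rel V) (P : {set {set V}}) (d : nat)
  : Prop :=
  forall A, A \in P -> #|[set B in P | (B != A) && red_edge e A B]| <= d.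

(* the graph has a partition sequence P_n, ..., P_1 (listed in this order)
   all of whose red graphs have maximum degree at most d, i.e. tww <= d *)
Definition tww_le (V : finType) (e : rel V) (d : nat) : Prop :=
  exists ps : seq {set {set V}},
    [/\ size ps = #|V|,
        0 < size ps -> nth set0 ps 0 = [set [set x] | x : V],
        forall i, i.+1 < size ps -> merge_step (nth set0 ps i) (nth set0 ps i.+1) &
        forall i, i < size ps -> red_maxdeg_le e (nth set0 ps i) d].

Definition induced (adj : rel Node) (S : seq Node) : rel (seq_sub S) :=
  fun x y => adj (ssval x) (ssval y).
Arguments induced adj S : clear implicits.

(* Main.v *)
Require Import Defs.
From mathcomp Require Import all_boot zify.
From Stdlib Require Import IndefiniteDescription.
Set Implicit Arguments. Unset Strict Implicit. Unset Printing Implicit Defensive.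

Section Generic.
Variables (V : finType) (e : rel V).

Definition refines (P Q : {set {set V}}) :=
  forall A, A \in P -> exists2 B, B \in Q & A \subset B.

Lemma red_mono (A A' B B' : {set V}) : A \subset A' -> B \subset B' ->
  red_edge e A B -> red_edge e A' B'.
Proof.
move=> /subsetP sA /subsetP sB.
move=> /existsP[u /andP[uA /existsP[v /andP[vA /existsP[u' /andP[u'B /existsP[v' /andP[v'B H]]]]]]]].
apply/existsP; exists u; rewrite sA //=; apply/existsP; exists v; rewrite sA //=.
apply/existsP; exists u'; rewrite sB //=; apply/existsP; exists v'; rewrite sB //=.
Qed.

Lemma part_same (Q : {set {set V}}) (B B' : {set V}) x : partition Q [set: V] ->
  B \in Q -> B' \in Q -> x \in B -> x \in B' -> B = B'.
Proof.
move=> pQ BQ B'Q xB xB'; have tQ := partition_trivIset pQ.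
by rewrite -(def_pblock tQ BQ xB) (def_pblock tQ B'Q xB').
Qed.

Lemma part_nonempty (Q : {set {set V}}) (B : {set V}) : partition Q [set: V] -> B \in Q ->
  exists x, x \in B.
Proof.
move=> pQ BQ; have := partition_neq0 pQ BQ; case/set0Pn=> x xB; by exists x.
Qed.

Lemma part_in (Q : {set {set V}}) x : partition Q [set: V] ->
  exists2 B, B \in Q & x \in B.
Proof.
move=> pQ; exists (pblock Q x); last by rewrite mem_pblock (cover_partition pQ) inE.
by apply: pblock_mem; rewrite (cover_partition pQ) inE.
Qed.

Lemma redL (R Q : {set {set V}}) D : partition R [set: V] -> partition Q [set: V] ->
  refines R Q -> red_maxdeg_le e Q D -> red_maxdeg_le e R (D + #|R :\: Q|).
Proof.
move=> pR pQ rRQ hQ A AR.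
have [A' A'Q sAA'] := rRQ A AR.
have sub : [set B in R | (B != A) && red_edge e A B] \subset
   (R :\: Q) :|: [set B in Q | (B != A') && red_edge e A' B].
  apply/subsetP=> B; rewrite !inE => /andP[BR /andP[nBA rAB]].
  case BQ: (B \in Q); rewrite /= ?BR ?orbT //=.
  rewrite (red_mono sAA' (subxx B) rAB) andbT; apply/eqP=> EB.
  have [x xA] := part_nonempty pR AR.
  have xB : x \in B by rewrite EB (subsetP sAA').
  by move: nBA; rewrite (part_same pR BR AR xB xA) eqxx.
apply: leq_trans (subset_leq_card sub) _.
rewrite addnC; apply: leq_trans (leq_card_setU _ _).1 _.
by rewrite leq_add2l hQ.
Qed.

Definition mergeP (P : {set {set V}}) (A1 A2 : {set V}) := (A1 :|: A2) |: (P :\ A1 :\ A2).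

Lemma merge_partition (P : {set {set V}}) (A1 A2 : {set V}) : partition P [set: V] -> A1 \in P -> A2 \in P ->
  A1 != A2 -> partition (mergeP P A1 A2) [set: V] /\ #|mergeP P A1 A2|.+1 = #|P|.
Proof.
move=> pP A1P A2P n12.
have p1 := partitionD1 pP A1P.
have A2P1 : A2 \in P :\ A1 by rewrite !inE A2P eq_sym n12.
have p2 := partitionD1 p1 A2P1.
have [x xA1] := part_nonempty pP A1P.
have ne : A1 :|: A2 != set0 by apply/set0Pn; exists x; rewrite inE xA1.
have dis : [disjoint A1 :|: A2 & [set: V] :\: A1 :\: A2].
  by rewrite disjoint_subset; apply/subsetP=> y; rewrite !inE; case/orP=> ->; rewrite ?andbF.
have p3 := partitionU1 p2 ne dis.
have E : (A1 :|: A2) :|: ([set: V] :\: A1 :\: A2) = [set: V].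
  by apply/setP=> y; rewrite !inE; case: (y \in A1); case: (y \in A2).
rewrite E in p3; split => //.
rewrite /mergeP cardsU1 (cardsD1 A1 P) A1P (cardsD1 A2 (P :\ A1)) A2P1.
have -> : (A1 :|: A2) \notin P :\ A1 :\ A2 => //.
apply/negP=> H; have := partitionS p2 H; move/subsetP/(_ x); rewrite !inE xA1 /=. by rewrite andbF; move/(_ isT).

Qed.

Lemma merge_exists (P Q : {set {set V}}) : partition P [set: V] -> partition Q [set: V] ->
  refines P Q -> P != Q ->
  exists A1 A2 B, [/\ A1 \in P, A2 \in P, A1 != A2, B \in Q & (A1 \subset B) && (A2 \subset B)].
Proof.
move=> pP pQ rPQ nPQ.
case: (boolP [exists A1 in P, exists A2 in P, (A1 != A2) &&
   [exists B in Q, (A1 \subset B) && (A2 \subset B)]]).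
  move=> /existsP[A1 /andP[A1P /existsP[A2 /andP[A2P /andP[n12 /existsP[B /andP[BQ HB]]]]]]].
  by exists A1, A2, B.
move=> /negP H; exfalso; apply: (negP nPQ).
have key : forall A, A \in P -> forall B, B \in Q -> A \subset B -> A = B.
  move=> A AP B BQ sAB; apply/eqP; rewrite eqEsubset sAB /=.
  apply/subsetP=> x xB.
  have [C CP xC] := part_in x pP.
  have [B' B'Q sCB'] := rPQ C CP.
  have EB : B' = B by apply: (part_same pQ B'Q BQ (subsetP sCB' _ xC) xB).
  case: (eqVneq A C) => [-> //| nAC].
  exfalso; apply: H; apply/existsP; exists A; rewrite AP /=.
  apply/existsP; exists C; rewrite CP nAC /=; apply/existsP; exists B.
  by rewrite BQ sAB -EB sCB'.
apply/eqP/setP=> C; apply/idP/idP => [CP | CQ].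
  have [B BQ sCB] := rPQ C CP; by rewrite (key C CP B BQ sCB).
have [x xC] := part_nonempty pQ CQ.
have [A AP xA] := part_in x pP.
have [B BQ sAB] := rPQ A AP.
have EA := key A AP B BQ sAB; rewrite EA in xA AP.
by rewrite -(part_same pQ BQ CQ xA xC).
Qed.

Definition chain (P : {set {set V}}) d := exists ps : seq {set {set V}},
  [/\ size ps = #|P|, 0 < size ps -> nth set0 ps 0 = P,
      forall i, i.+1 < size ps -> merge_step (nth set0 ps i) (nth set0 ps i.+1) &
      forall i, i < size ps -> red_maxdeg_le e (nth set0 ps i) d].

Lemma chain_le1 (P : {set {set V}}) d : #|P| <= 1 -> chain P d.
Proof.
move=> h; case: (posnP #|P|) => [h0 | hp].
  by exists [::]; split => //= i; rewrite ltn0.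
have h1 : #|P| = 1 by apply/anti_leq; rewrite h hp.
exists [:: P]; split => //=.
move=> [|i] // _ A AP /=; apply: leq_trans (_ : 0 <= d) => //; rewrite leqn0 cards_eq0.
apply/eqP/setP=> B; rewrite !inE; apply/negP => /andP[BP /andP[nBA _]].
move: h; rewrite (cardsD1 A P) AP ltnS leqn0 cards_eq0 => /eqP/setP/(_ B).
by rewrite !inE nBA BP.
Qed.

Lemma chain_refine (Q : {set {set V}}) D K : partition Q [set: V] ->
  red_maxdeg_le e Q D -> chain Q (D + K) ->
  forall n (P : {set {set V}}), #|P| <= n -> partition P [set: V] -> refines P Q ->
  #|P :\: Q| <= K -> chain P (D + K).
Proof.
move=> pQ hQ cQ; elim=> [|n IH] P hn pP rPQ hK.
  case: (eqVneq P Q) => [-> //|nPQ].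
  by apply: chain_le1; apply: leq_trans hn _.
case: (eqVneq P Q) => [-> //|nPQ].
have [A1 [A2 [B [A1P A2P n12 BQ /andP[s1 s2]]]]] := merge_exists pP pQ rPQ nPQ.
have [pP' cP'] := merge_partition pP A1P A2P n12.
set P' := mergeP P A1 A2 in pP' cP'.
have notQ : forall (A A' : {set V}), A \in P -> A \subset B -> A != A' -> A' \in P -> A' \subset B -> A \notin Q.
  move=> A A' AP sAB nAA' A'P sA'B; apply/negP=> AQ.
  have [x xA] := part_nonempty pP AP.
  have EA := part_same pQ AQ BQ xA (subsetP sAB _ xA).
  have [y yA'] := part_nonempty pP A'P.
  have yA : y \in A by rewrite EA (subsetP sA'B).
  by move: nAA'; rewrite (part_same pP AP A'P yA yA') eqxx.
have n1Q := notQ A1 A2 A1P s1 n12 A2P s2.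
have n21 : A2 != A1 by rewrite eq_sym.
have n2Q := notQ A2 A1 A2P s2 n21 A1P s1.
have rP'Q : refines P' Q.
  move=> A; rewrite !inE => /orP[/eqP ->|/andP[_ /andP[_ AP]]].
    by exists B => //; rewrite subUset s1 s2.
  exact: rPQ.
have hK' : #|P' :\: Q| <= K.
  apply: leq_trans hK.
  have sub : P' :\: Q \subset (A1 :|: A2) |: ((P :\: Q) :\ A1 :\ A2).
    apply/subsetP=> C; rewrite !inE => /andP[nCQ /orP[->//|/andP[-> /andP[-> ->]]]].
    by rewrite nCQ orbT.
  apply: leq_trans (subset_leq_card sub) _.
  rewrite cardsU1 (cardsD1 A1 (P :\: Q)) (cardsD1 A2 ((P :\: Q) :\ A1)) !inE.
  rewrite A1P n1Q A2P n2Q n21 /=.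
  by apply: leq_add; [case: (~~ _) | exact: leq_addl].
have c' : chain P' (D + K).
  apply: IH => //; rewrite -ltnS cP' //.
have [ps [sz h0 hm hr]] := c'.
exists (P :: ps); split => //=.
- by rewrite sz cP'.
- case=> [|i] /=.
    rewrite ltnS => hp; rewrite h0 //; exists A1, A2; split => //.
  by move=> hi; apply: hm.
- case=> [|i] /= hi; last by apply: hr.

  move=> A AP; apply: leq_trans (redL pP pQ rPQ hQ AP) _; by rewrite leq_add2l.
Qed.

End Generic.

Section Keys.
Variables (V : finType) (e : rel V) (K : eqType).

Definition Pk (f : V -> K) := preim_partition f [set: V].

Lemma Pk_part f : partition (Pk f) [set: V].
Proof. exact: preim_partitionP. Qed.

Lemma Pk_mem f x y : (y \in pblock (Pk f) x) = (f x == f y).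
Proof.
rewrite /Pk /preim_partition pblock_equivalence_partition ?inE //.
by split=> // /eqP->.
Qed.

Lemma Pk_block f B : B \in Pk f -> exists2 x, x \in B & B = pblock (Pk f) x.
Proof.
move=> BP; have [x xB] := part_nonempty (Pk_part f) BP.
exists x => //; by rewrite (def_pblock (partition_trivIset (Pk_part f)) BP xB).
Qed.

Lemma Pk_pblock f x : pblock (Pk f) x \in Pk f.
Proof. by apply: pblock_mem; rewrite (cover_partition (Pk_part f)) inE. Qed.

Lemma Pk_card f (A : {set {set V}}) (L : seq K) : A \subset Pk f ->
  (forall B, B \in A -> exists2 x, x \in B & f x \in L) -> #|A| <= size L.
Proof.
move=> /subsetP sA hA.
pose phi (B : {set V}) := omap f [pick x in B].
have fB : forall B x, B \in Pk f -> x \in B -> phi B = Some (f x).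
  move=> B x BP xB; rewrite /phi; case: pickP => [y yB|]; last by move/(_ x); rewrite xB.
  have [z zB EB] := Pk_block BP.
  move: xB yB; rewrite EB !Pk_mem => /eqP h1 /eqP h2 /=; by rewrite -h1 -h2.
have inj : {in A &, injective phi}.
  move=> B B' BA B'A E; have BP := sA B BA; have B'P := sA B' B'A.
  have [y yB EB] := Pk_block BP; have [y' yB' EB'] := Pk_block B'P.
  move: E; rewrite (fB B y BP yB) (fB B' y' B'P yB') => -[E].
  apply: (part_same (Pk_part f) BP B'P yB); by rewrite EB' Pk_mem E.
rewrite cardE -(size_map phi) -(size_map Some L); apply: uniq_leq_size.
  by rewrite map_inj_in_uniq ?enum_uniq // => x y; rewrite !mem_enum; apply: inj.
move=> k /mapP[B]; rewrite mem_enum => BA ->.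
have [x xB xL] := hA B BA; by rewrite (fB B x (sA B BA) xB) map_f.
Qed.

Lemma Pk_refine (f g : V -> K) : (forall x y, f x = f y -> g x = g y) ->
  refines (Pk f) (Pk g).
Proof.
move=> h A AP; have [x xA EA] := Pk_block AP.
exists (pblock (Pk g) x); first exact: Pk_pblock.
apply/subsetP=> y; rewrite EA !Pk_mem => /eqP/h ->; by [].
Qed.

Lemma Pk_diff (f g : V -> K) (L : seq K) :
  (forall x, f x \notin L -> forall y, (g x == g y) = (f x == f y)) ->
  #|Pk f :\: Pk g| <= size L.
Proof.
move=> h; apply: (Pk_card (f := f)); first by apply/subsetP=> B; rewrite inE => /andP[].
move=> B; rewrite inE => /andP[nBg BP]; have [x xB EB] := Pk_block BP.
exists x => //; apply/negPn/negP=> nL; move: nBg.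
have -> : B = pblock (Pk g) x.
  by apply/setP=> y; rewrite EB !Pk_mem h.
by rewrite Pk_pblock.
Qed.

Lemma Pk_red (f : V -> K) (cand : K -> seq K) D :
  (forall u v u' v', f u = f v -> f u' = f v' -> f u != f u' -> e u u' -> ~~ e v v' ->
     f u' \in cand (f u)) ->
  (forall k, size (cand k) <= D) -> red_maxdeg_le e (Pk f) D.
Proof.
move=> h hD A AP; have [x0 x0A EA] := Pk_block AP.
apply: leq_trans (hD (f x0)); apply: (Pk_card (f := f)).
  by apply/subsetP=> B; rewrite inE => /andP[].
move=> B; rewrite inE => /andP[BP /andP[nBA]].
move=> /existsP[u /andP[uA /existsP[v /andP[vA /existsP[u' /andP[u'B /existsP[v' /andP[v'B /andP[H1 H2]]]]]]]]].
have [y yB EB] := Pk_block BP.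
move: uA vA u'B v'B; rewrite EA EB !Pk_mem => /eqP fu /eqP fv /eqP fu' /eqP fv'.
exists u'; first by rewrite Pk_mem fu'.
rewrite fu; apply: (h u v u' v') => //; first by rewrite -fu -fv.
  by rewrite -fu' -fv'.
apply/eqP=> E; move: nBA; rewrite EA EB.
have -> : pblock (Pk f) y = pblock (Pk f) x0.
  by apply/setP=> z; rewrite !Pk_mem fu' -E fu.
by rewrite eqxx.
Qed.

Lemma Pk_ext (f g : V -> K) : f =1 g -> Pk f = Pk g.
Proof.
move=> h; rewrite /Pk /preim_partition /equivalence_partition.
apply/setP=> B; apply/imsetP/imsetP => -[x xD ->]; exists x => //;
  by apply/setP=> y; rewrite !inE !h.
Qed.

Lemma Pk_inj (f : V -> K) : injective f -> Pk f = [set [set x] | x : V].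
Proof.
move=> h; rewrite /Pk /preim_partition /equivalence_partition.
apply/setP=> B; apply/imsetP/imsetP => -[x xD ->]; exists x => //;
  by apply/setP=> y; rewrite !inE /= (inj_eq h) eq_sym.
Qed.

Lemma Pk_const (f : V -> K) : (forall x y, f x = f y) -> #|Pk f| <= 1.
Proof.
move=> h; apply/card_le1P=> A AP B; have [x xA EA] := Pk_block AP.
rewrite inE; apply/idP/eqP=> [BP|->//].
have [y yB EB] := Pk_block BP; rewrite EA EB.
by apply/setP=> z; rewrite !Pk_mem (h y z) (h x z).
Qed.

Lemma chain_step (f g : V -> K) D Kb (L : seq K) :
  chain e (Pk g) (D + Kb) -> red_maxdeg_le e (Pk g) D ->
  (forall x y, f x = f y -> g x = g y) ->
  (forall x, f x \notin L -> forall y, (g x == g y) = (f x == f y)) ->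
  size L <= Kb -> chain e (Pk f) (D + Kb).
Proof.
move=> cg rg hc hL hs.
apply: (chain_refine (Pk_part g) rg cg (leqnn _) (Pk_part f) (Pk_refine hc)).
exact: leq_trans (Pk_diff hL) hs.
Qed.

End Keys.

Section Tree.
Variable T : ptree.

Lemma anc_comp n i a b : anc_pos T n i (a + b) = anc_pos T (n - a) (anc_pos T n i a) b.
Proof.
elim: a n i => [|a IH] n i /=; first by rewrite subn0.
by rewrite IH; congr anc_pos; lia.
Qed.

Lemma anc1 n i : anc_pos T n i 1 = par T n.-1 i.
Proof. by []. Qed.

Lemma anc_valid n i k : i < lsize T n -> k <= n -> anc_pos T n i k < lsize T (n - k).
Proof.
elim: k n i => [|k IH] n i hi hk /=; first by rewrite subn0.
case: n hi hk => [|n] hi hk //=.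
have := IH n (par T n i) (par_lt hi) hk; by rewrite subSS.
Qed.

Lemma isancE (u x : Node) : is_anc T u x = (u.1 <= x.1) && (anc_pos T x.1 x.2 (x.1 - u.1) == u.2).
Proof. by []. Qed.

Lemma anc_A2 (u x : Node) l : is_anc T u x -> l <= u.1 ->
  anc_pos T x.1 x.2 (x.1 - l) = anc_pos T u.1 u.2 (u.1 - l).
Proof.
rewrite isancE => /andP[hux /eqP hp] hl.
have -> : x.1 - l = (x.1 - u.1) + (u.1 - l) by lia.
rewrite anc_comp hp; congr anc_pos; lia.
Qed.

Lemma is_anc_refl x : is_anc T x x.
Proof. by rewrite isancE leqnn subnn eqxx. Qed.

Lemma is_anc_trans a b c : is_anc T a b -> is_anc T b c -> is_anc T a c.
Proof.
move=> hab hbc; have := hab; rewrite !isancE => /andP[h1 /eqP h2].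
have := hbc; rewrite isancE => /andP[h3 _].
rewrite (anc_A2 hbc h1) h2 eqxx andbT; lia.
Qed.

Lemma is_anc_cmp a b x : is_anc T a x -> is_anc T b x -> a.1 <= b.1 -> is_anc T a b.
Proof.
move=> hax hbx hab; have := hax; rewrite !isancE => /andP[h1 /eqP h2].
by rewrite hab /= -(anc_A2 hbx hab) h2.
Qed.

Lemma is_anc_eq a b x : is_anc T a x -> is_anc T b x -> a.1 = b.1 -> a = b.
Proof.
move=> hax hbx hab; have := hax; rewrite !isancE => /andP[h1 /eqP h2].
have := hbx; rewrite !isancE => /andP[h3 /eqP h4].
case: a b hab h2 h4 {h1 h3 hax hbx} => [a1 a2] [b1 b2] /= -> <- <- //.
Qed.

Lemma is_anc_valid u x : is_anc T u x -> valid T x -> valid T u.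
Proof.
rewrite isancE => /andP[h1 /eqP h2] hx; rewrite /valid -h2.
have := anc_valid hx (leq_subr u.1 x.1); by rewrite subKn.
Qed.

Lemma is_anc_depth u x : is_anc T u x -> u.1 <= x.1.
Proof. by rewrite isancE => /andP[]. Qed.

Hypothesis neatT : neat T.

Lemma has_child n q : q < lsize T n -> exists2 c, c < lsize T n.+1 & par T n c = q.
Proof.
move=> hq; have := neatT (v := (n, q)) hq; rewrite /nchildren /= -has_count.
move=> /hasP[c]; rewrite mem_iota add0n => /andP[_ hc] /eqP hpc; by exists c.
Qed.

Lemma par_step n p : p.+1 < lsize T n.+1 ->
  par T n p.+1 = par T n p \/ par T n p.+1 = (par T n p).+1.
Proof.
move=> hp.
have hm := par_mono (leqnSn p) hp.
case: (ltngtP (par T n p.+1) (par T n p).+1) => h; [left; lia| |by right].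
have hq : (par T n p).+1 < lsize T n by apply: leq_trans (par_lt hp); lia.
have [c hc hpc] := has_child hq.
case: (leqP c p) => hcp.
  have := par_mono hcp (ltnW hp); lia.
have := par_mono hcp hc; lia.
Qed.

Lemma anc_step k d p : k <= d -> p.+1 < lsize T d ->
  anc_pos T d p.+1 k = anc_pos T d p k \/ anc_pos T d p.+1 k = (anc_pos T d p k).+1.
Proof.
elim: k d p => [|k IH] d p hk hp /=; first by right.
case: d hk hp => [|d] // hk hp /=.
case: (par_step hp) => E; rewrite E; first by left.
apply: IH => //; have := par_lt hp; rewrite E; lia.
Qed.

End Tree.

Section Main.
Variables (T : ptree) (adj : rel Node) (Xs : Node -> seq Node) (t : nat).
Hypothesis HW : layered_wheel T adj.
Hypothesis Hn : neat T.
Hypothesis HXs : forall v, size (Xs v) <= t.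
Hypothesis HXd : forall v y, y \in Xs v -> y.1 < v.1.
Hypothesis HXp : forall v, valid T v -> forall x y, adj x y -> x.1 != y.1 ->
  is_anc T v x -> ~~ is_anc T v y -> y.1 < v.1 -> y \in Xs v.

Definition mask (x : Node) (L : seq Node) := [seq adj x y | y <- L].
Definition guard (o : nat * Node) := if o.1 == 2 then rcons (Xs o.2) o.2 else Xs o.2.
Definition own m j i a : nat * Node :=
  if j <= a then (1, (m, a))
  else if par T m.-1 a < i then (1, (m.-1, par T m.-1 a)) else (2, (m.-1, par T m.-1 a)).
Definition Key := ((nat * Node) * seq bool)%type.
Definition key m j i (x : Node) : Key :=
  if m <= x.1 then (own m j i (anc_pos T x.1 x.2 (x.1 - m)),
                    mask x (guard (own m j i (anc_pos T x.1 x.2 (x.1 - m)))))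
  else if (x.1.+1 == m) && (x.2 < i) then ((1, x), mask x (Xs x)) else ((0, x), [::]).
Definition inv m j i := ((i == 0) || (j == lsize T m)) && ((0 < m) || (j == 0)).

Lemma homog r w u z : valid T r -> is_anc T r w -> is_anc T r u ->
  mask w (Xs r) = mask u (Xs r) -> z.1 < r.1 -> adj w z = adj u z.
Proof.
move=> vr hw hu hm hz.
case zX: (z \in Xs r); first by move/eq_in_map: hm => /(_ z zX).
have nadj : forall x, is_anc T r x -> adj x z = false.
  move=> x hx; apply/negbTE/negP=> a.
  have h1 : x.1 != z.1 by have := is_anc_depth hx; apply: contraTneq => ->; lia.
  have h2 : ~~ is_anc T r z by apply/negP=> /is_anc_depth; lia.
  by move: (HXp vr a h1 hx h2 hz); rewrite zX.
by rewrite !nadj.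
Qed.

Lemma guard_mask w u o : mask w (guard o) = mask u (guard o) -> mask w (Xs o.2) = mask u (Xs o.2).
Proof.
rewrite /guard; case: ifP => _ // ; rewrite /mask !map_rcons => /rcons_inj [E _]; exact: E.
Qed.

Lemma key_node m j i x : (key m j i x).1.2 =
  if m <= x.1 then (if j <= anc_pos T x.1 x.2 (x.1 - m) then (m, anc_pos T x.1 x.2 (x.1 - m))
                    else (m.-1, par T m.-1 (anc_pos T x.1 x.2 (x.1 - m)))) else x.
Proof.
rewrite /key /own; by repeat case: ifP.
Qed.

Lemma S0 m j i x : (key m j i x).1.1 = 0 -> (key m j i x).1.2 = x.
Proof.
rewrite /key /own; by repeat case: ifP.
Qed.

Lemma Rlem m j i x : inv m j i -> valid T x -> (key m j i x).1.1 != 0 ->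
  [/\ is_anc T (key m j i x).1.2 x, (key m j i x).2 = mask x (guard (key m j i x).1)
    & ((key m j i x).1.2.1 = m \/ ((key m j i x).1.2.1).+1 = m)].
Proof.
move=> /andP[hi hm] vx; rewrite /key; case: ifP => hmx.
  set a := anc_pos T x.1 x.2 (x.1 - m).
  rewrite /own; case: ifP => hja.
    by move=> _; split => //=; [rewrite isancE /= hmx eqxx | left].
  have m0 : 0 < m by case/orP: hm => // /eqP j0; rewrite j0 leq0n in hja.
  have hanc : is_anc T (m.-1, par T m.-1 a) x.
    rewrite isancE /=; apply/andP; split; first lia.
    have -> : x.1 - m.-1 = (x.1 - m) + 1 by lia.
    by rewrite anc_comp -/a /= (_ : x.1 - (x.1 - m) = m) //; lia.
  by case: ifP => _ _; split => //=; right; lia.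
case: ifP => // /andP[/eqP h1 h2] _; split => //=; [exact: is_anc_refl | by right].
Qed.

Lemma Hkey m j i w u z : inv m j i -> valid T w -> valid T u -> key m j i w = key m j i u ->
  (key m j i u).1.1 != 0 -> z.1 < (key m j i u).1.2.1 -> adj w z = adj u z.
Proof.
move=> hinv vw vu E nz hz.
have nz' : (key m j i w).1.1 != 0 by rewrite E.
have [aw mw _] := Rlem hinv vw nz'; have [au mu _] := Rlem hinv vu nz.
rewrite E in aw mw.
apply: (homog (r := (key m j i u).1.2)) => //; first exact: is_anc_valid au vu.
by apply: guard_mask; rewrite -mw -mu.
Qed.

Lemma S0eq m j i x y : (key m j i x).1.1 = 0 -> key m j i y = key m j i x -> y = x.
Proof.
move=> h0 E; have h0' : (key m j i y).1.1 = 0 by rewrite E.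
by rewrite -(S0 h0') E (S0 h0).
Qed.

Lemma Anc m j i u u' : inv m j i -> valid T u -> valid T u' -> is_anc T u' u -> u'.1 < u.1 ->
  (key m j i u').1.2 = (key m j i u).1.2 \/
  ((key m j i u').1.1 = 0 /\ forall w, valid T w -> key m j i w = key m j i u -> adj w u' = adj u u').
Proof.
move=> hinv vu vu' hanc hd.
case: (leqP m u'.1) => hm.
  left; rewrite !key_node hm (leq_trans hm (ltnW hd)) (anc_A2 hanc hm) //.
case: (eqVneq (key m j i u').1.1 0) => h0.
  case: (eqVneq (key m j i u).1.1 0) => hu0.
    right; split => // w vw E; by rewrite (S0eq hu0 E).
  have [ar _ hr] := Rlem hinv vu hu0.
  case: (ltnP u'.1 (key m j i u).1.2.1) => hr'.
    right; split => // w vw E; exact: Hkey hinv vw vu E hu0 hr'.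
  left; rewrite (S0 h0); apply: (is_anc_eq hanc ar); lia.
move: h0; rewrite /key (negbTE (_ : ~~ (m <= u'.1))) -?ltnNge //.
case: ifP => // /andP[/eqP hm1 hi] _ /=; left.
have hmu : m <= u.1 by lia.
rewrite !key_node hmu.
set a := anc_pos T u.1 u.2 (u.1 - m).
have va : a < lsize T m.
  have := anc_valid vu (leq_subr m u.1); by rewrite subKn.
have ja : ~~ (j <= a).
  move: hinv => /andP[/orP[/eqP i0|/eqP jl] _]; first by rewrite i0 in hi.
  by rewrite jl -ltnNge.
rewrite (negbTE ja).
have := hanc; rewrite isancE => /andP[_ /eqP E].
have E2 : u.1 - u'.1 = (u.1 - m) + 1 by lia.
rewrite E2 anc_comp -/a (_ : u.1 - (u.1 - m) = m) /= in E; last lia.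
move: hm1 E; case: u' {vu' hanc hd hm hi E2} => u1 u2 /= hm1 E; by rewrite -E -hm1.
Qed.

Definition nbn m j (r : Node) : seq Node :=
  [:: r; (r.1, r.2.-1); (r.1, r.2.+1); (r.1.-1, par T r.1.-1 r.2.-1); (m, j)].

Lemma Lay m j i u u' : valid T u -> valid T u' -> u'.1 = u.1 -> u'.2 = u.2.+1 ->
  (key m j i u').1.2 \in nbn m j (key m j i u).1.2 /\
  (key m j i u).1.2 \in nbn m j (key m j i u').1.2.
Proof.
case: u' => u1' u2'; case: u => u1 u2 /= vu vu' E1 E2; subst u1' u2'.
rewrite !key_node /=.
case: (leqP m u1) => hm; last by rewrite /nbn /= !inE !eqxx !orbT.
set a := anc_pos T u1 u2 (u1 - m).
have hs := anc_step Hn (leq_subr m u1) vu'.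
have va' : anc_pos T u1 u2.+1 (u1 - m) < lsize T m.
  have := anc_valid vu' (leq_subr m u1); by rewrite subKn.
case: hs => E; rewrite E in va' *; first by rewrite /nbn !inE !eqxx.
case: (leqP j a) => hja.
  by rewrite (leq_trans hja (leqnSn a)) /nbn /= !inE !eqxx !orbT.
case: (leqP j a.+1) => hja'.
  have -> : j = a.+1 by lia.
  by rewrite /nbn /= !inE !eqxx !orbT.
have m0 : 0 < m.
  apply: contraTT va' => h0; have -> : m = 0 by lia.
  by rewrite lsize_root.
have va'' : a.+1 < lsize T (m.-1).+1 by rewrite prednK.
case: (par_step Hn va'') => ->; first by rewrite /nbn !inE !eqxx.
by rewrite /nbn /= !inE !eqxx !orbT.
Qed.

Lemma redlem m j i u v u' v' : inv m j i -> valid T u -> valid T v -> valid T u' -> valid T v' ->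
  key m j i u = key m j i v -> key m j i u' = key m j i v' -> key m j i u != key m j i u' ->
  adj u u' -> ~~ adj v v' -> (key m j i u').1.2 \in nbn m j (key m j i u).1.2.
Proof.
move=> hinv vu vv vu' vv' Euv Eu'v' nE a1 a2.
case: (eqVneq u.1 u'.1) => hd.
  have vu2 : u'.2 < lsize T u.1 by rewrite hd.
  have := lw_layer HW vu vu2.
  have -> : (u.1, u.2) = u by case: u {vu vu2 Euv nE a1 a2 hd}.
  have -> : (u.1, u'.2) = u' by rewrite hd; case: u' {vu' vu2 Eu'v' nE a1 a2 hd}.
  rewrite a1 => /esym/orP[/eqP h|/eqP h].
    by have [] := Lay m j i vu vu' (esym hd) (esym h).
  by have [] := Lay m j i vu' vu hd (esym h).
have := lw_anc HW a1 hd => /orP[h|h].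
  have hd' : u.1 < u'.1 by have := is_anc_depth h; lia.
  case: (Anc hinv vu' vu h hd') => [->|[h0 hw]]; first by rewrite /nbn inE eqxx.
  have Ev : v = u by apply: (S0eq h0); rewrite Euv.
  move: a2; rewrite Ev (lw_sym HW) (hw v' vv' (esym Eu'v')) (lw_sym HW) a1 //.
have hd' : u'.1 < u.1 by have := is_anc_depth h; lia.
case: (Anc hinv vu vu' h hd') => [->|[h0 hw]]; first by rewrite /nbn inE eqxx.
have Ev' : v' = u' by apply: (S0eq h0); rewrite Eu'v'.
by move: a2; rewrite Ev' (hw v vv (esym Euv)) a1.
Qed.


Fixpoint allbits n : seq (seq bool) :=
  if n is n'.+1 then [seq b :: s | b <- [:: true; false], s <- allbits n'] else [:: [::]].

Lemma allbits_mem n s : size s = n -> s \in allbits n.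
Proof.
elim: n s => [|n IH] [|b s] //= [hs].
by rewrite !mem_cat; case: b; rewrite map_f ?orbT // IH.
Qed.

Lemma allbits_size n : size (allbits n) = 2 ^ n.
Proof. elim: n => [|n IH] //=; rewrite !size_cat !size_map IH expnS /=; lia. Qed.

Definition rk (o : Node) : seq Key :=
  ((0, o), [::]) :: [seq ((1, o), bs) | bs <- allbits (size (Xs o))] ++
                   [seq ((2, o), bs) | bs <- allbits (size (Xs o)).+1].

Lemma rk_node o k : k \in rk o -> k.1.2 = o.
Proof.
rewrite /rk inE mem_cat => /orP[/eqP -> //|/orP[] /mapP[bs _ ->] //].
Qed.

Definition R0 := 1 + 2 ^ t + 2 ^ t.+1.

Lemma size_rk o : size (rk o) <= R0.
Proof.
rewrite /rk -cat1s !size_cat !size_map !allbits_size /R0 -addnA leq_add2l.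
apply: leq_add; apply: leq_pexp2l => //; rewrite ?ltnS; exact: HXs.
Qed.

Definition cand m j (k : Key) : seq Key := flatten [seq rk o | o <- nbn m j k.1.2].

Lemma size_flat_rk (s : seq Node) : size (flatten [seq rk o | o <- s]) <= size s * R0.
Proof.
elim: s => [|o s IH] //=; rewrite size_cat mulSn; apply: leq_add => //; exact: size_rk.
Qed.

Lemma size_cand m j k : size (cand m j k) <= 5 * R0.
Proof. exact: size_flat_rk. Qed.

Lemma keyform x (o : nat * Node) : (o.1 == 1) || (o.1 == 2) -> (o, mask x (guard o)) \in rk o.2.
Proof.
case: o => tg r /= /orP[/eqP ->|/eqP ->]; rewrite /rk /guard /= inE mem_cat.
  have h : mask x (Xs r) \in allbits (size (Xs r)) by apply: allbits_mem; rewrite size_map.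
  by have := map_f (fun bs => (1, r, bs)) h => ->.
have h : mask x (rcons (Xs r) r) \in allbits (size (Xs r)).+1.
  by apply: allbits_mem; rewrite size_map size_rcons.
by have := map_f (fun bs => (2, r, bs)) h => ->; rewrite !orbT.
Qed.

Lemma key_rk m j i x : key m j i x \in rk (key m j i x).1.2.
Proof.
rewrite /key; case: ifP => _.
  by apply: keyform; rewrite /own; repeat case: ifP.
case: ifP => _; last by rewrite /rk inE eqxx.
by have := @keyform x (1, x); rewrite /guard /=; apply.
Qed.

Lemma cand_mem m j (k k' : Key) : k'.1.2 \in nbn m j k.1.2 -> k' \in rk k'.1.2 -> k' \in cand m j k.
Proof. move=> h1 h2; apply/flatten_mapP; by exists k'.1.2. Qed.

Lemma step_cond (f g : Node -> Key) (L : seq Key) :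
  (forall x, valid T x -> f x \notin L -> g x = f x) ->
  (forall x, valid T x -> f x \in L -> g x \in L) ->
  forall x, valid T x -> f x \notin L -> forall y, valid T y -> (g x == g y) = (f x == f y).
Proof.
move=> c1 c2 x vx nx y vy; rewrite (c1 x vx nx).
case yL: (f y \in L); last by rewrite (c1 y vy (negbT yL)).
have gL := c2 y vy yL.
have -> : (f x == g y) = false by apply/negbTE; apply: contraNneq nx => ->.
by apply/esym/negbTE; apply: contraNneq nx => ->.
Qed.

Lemma stepA_form m j x : 0 < m -> key m j.+1 0 x =
  if (key m j 0 x).1 == (1, (m, j))
  then ((2, (m.-1, par T m.-1 j)), mask x (rcons (Xs (m.-1, par T m.-1 j)) (m.-1, par T m.-1 j)))
  else key m j 0 x.
Proof.
move=> m0; rewrite /key; case: ifP => hm; last by rewrite !ltn0 !andbF.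
rewrite /own /=; set a := anc_pos T x.1 x.2 (x.1 - m).
case: (eqVneq a j) => [->|naj].
  by rewrite leqnn ltnn eqxx /guard.
case: (leqP j a) => hja.
  have -> : j < a by rewrite ltn_neqAle eq_sym naj hja.
  by rewrite xpair_eqE /= xpair_eqE /= eqxx (negbTE naj).
by rewrite ltnNge (ltnW hja).
Qed.

Lemma inv_A m j : 0 < m -> inv m j 0.
Proof. by move=> m0; rewrite /inv eqxx m0. Qed.

Lemma inv_B m i : 0 < m -> inv m (lsize T m) i.
Proof. by move=> m0; rewrite /inv eqxx m0 orbT. Qed.

Lemma stepA_ok m j : 0 < m ->
  [/\ forall x y, valid T x -> valid T y -> key m j 0 x = key m j 0 y -> key m j.+1 0 x = key m j.+1 0 y,
      forall x, valid T x -> key m j 0 x \notin rk (m, j) ++ rk (m.-1, par T m.-1 j) ->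
         forall y, valid T y -> (key m j.+1 0 x == key m j.+1 0 y) = (key m j 0 x == key m j 0 y)
    & size (rk (m, j) ++ rk (m.-1, par T m.-1 j)) <= 2 * R0].
Proof.
move=> m0; split.
- move=> x y vx vy E; rewrite !stepA_form // E; case: ifP => // /eqP h.
  congr pair; apply/eq_in_map => z hz.
  apply: (Hkey (@inv_A m j m0) vx vy E); first by rewrite h.
  move: hz; rewrite h mem_rcons inE => /orP[/eqP -> | /HXd].
    by rewrite /= ltn_predL.
  by move=> /= h'; apply: leq_trans h' _; rewrite leq_pred.
- apply: step_cond => x vx.
    rewrite stepA_form //; case: ifP => // /eqP h; rewrite mem_cat negb_or => /andP[n1 _].
    by move: n1; have := key_rk m j 0 x; rewrite h /= => ->.
  rewrite stepA_form //; case: ifP => // _ _; rewrite mem_cat; apply/orP; right.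
  by have := @keyform x (2, (m.-1, par T m.-1 j)); rewrite /guard /=; apply.
- by rewrite size_cat mul2n -addnn; apply: leq_add; apply: size_rk.
Qed.

Lemma stepB_form m i x : 0 < m -> valid T x -> key m (lsize T m) i.+1 x =
  if (key m (lsize T m) i x).1.2 == (m.-1, i)
  then ((1, (m.-1, i)), mask x (Xs (m.-1, i))) else key m (lsize T m) i x.
Proof.
move=> m0 vx; rewrite /key; case: ifP => hm.
  set a := anc_pos T x.1 x.2 (x.1 - m).
  have va : a < lsize T m by have := anc_valid vx (leq_subr m x.1); rewrite subKn.
  have la : (lsize T m <= a) = false by rewrite leqNgt va.
  rewrite /own la /=.
  case: (eqVneq (par T m.-1 a) i) => [->|ni].
    by rewrite ltnn ltnSn eqxx /guard.
  rewrite ltnS leq_eqVlt (negbTE ni) /=.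
  by case: ifP => _; rewrite /= xpair_eqE eqxx /= (negbTE ni).
case: (eqVneq x.1.+1 m) => /= hx1.
  case: (eqVneq x.2 i) => [hx2|nx2].
    rewrite hx2 ltnn ltnSn /=.
    have -> : x = (m.-1, i) by case: x hx1 hx2 {hm vx} => x1 x2 /= <- ->.
    by rewrite eqxx.
  rewrite ltnS leq_eqVlt (negbTE nx2) /=.
  have Ex : (x == (m.-1, i)) = false by case: x {hm vx hx1} nx2 => x1 x2 /= nx2; rewrite xpair_eqE (negbTE nx2) andbF.
  by case: ifP => _ /=; rewrite Ex.
have -> : (x == (m.-1, i)) = false.
  by apply/negbTE; apply: contra hx1 => /eqP -> /=; rewrite prednK.
by [].
Qed.

Lemma stepB_ok m i : 0 < m ->
  [/\ forall x y, valid T x -> valid T y -> key m (lsize T m) i x = key m (lsize T m) i y ->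
        key m (lsize T m) i.+1 x = key m (lsize T m) i.+1 y,
      forall x, valid T x -> key m (lsize T m) i x \notin rk (m.-1, i) ->
         forall y, valid T y -> (key m (lsize T m) i.+1 x == key m (lsize T m) i.+1 y) =
                                (key m (lsize T m) i x == key m (lsize T m) i y)
    & size (rk (m.-1, i)) <= 2 * R0].
Proof.
move=> m0; split.
- move=> x y vx vy E; rewrite !stepB_form // E; case: ifP => // /eqP h.
  case: (eqVneq (key m (lsize T m) i y).1.1 0) => h0.
    by rewrite (S0eq h0 E).
  congr pair; apply/eq_in_map => z hz.
  apply: (Hkey (@inv_B m i m0) vx vy E h0); rewrite h /=; have := HXd hz; by [].
- apply: step_cond => x vx.
    rewrite stepB_form //; case: ifP => // /eqP h.
    by have := key_rk m (lsize T m) i x; rewrite h => ->.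
  rewrite stepB_form //; case: ifP => // _ _.
  by have := @keyform x (1, (m.-1, i)); rewrite /guard /=; apply.
- rewrite mul2n -addnn; apply: leq_trans (size_rk _) _; exact: leq_addr.
Qed.

Lemma bridge m x : 0 < m -> valid T x -> key m (lsize T m) (lsize T m.-1) x = key m.-1 0 0 x.
Proof.
move=> m0 vx; rewrite /key.
case: (leqP m x.1) => hm.
  have hm' : m.-1 <= x.1 by lia.
  rewrite hm'.
  set a := anc_pos T x.1 x.2 (x.1 - m).
  have va : a < lsize T m by have := anc_valid vx (leq_subr m x.1); rewrite subKn.
  have E : anc_pos T x.1 x.2 (x.1 - m.-1) = par T m.-1 a.
    have -> : x.1 - m.-1 = (x.1 - m) + 1 by lia.
    by rewrite anc_comp -/a (_ : x.1 - (x.1 - m) = m) //; lia.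
  have la : (lsize T m <= a) = false by rewrite leqNgt va.
  have lp : par T m.-1 a < lsize T m.-1 by apply: par_lt; rewrite prednK.
  by rewrite E /own la lp.
case: (eqVneq x.1.+1 m) => hx1 /=.
  subst m; rewrite /= leqnn subnn; have -> : x.2 < lsize T x.1 by [].
  by rewrite /own /=; case: x {vx hm m0}.
have -> : (m.-1 <= x.1) = false by apply/negbTE; lia.
by rewrite ltn0 andbF.
Qed.

End Main.

Theorem theorem1p14 (T : ptree) (adj : rel Node) :
  layered_wheel T adj -> neat T -> upward_restricted T adj ->
  exists d : nat, forall S : seq Node, all (valid T) S ->
    tww_le (induced adj S) d.
Proof.
move=> HW Hn [t HU].
have HX : forall v, exists X : seq Node, size X <= t /\ (valid T v -> forall x y, adj x y ->
    x.1 != y.1 -> is_anc T v x -> ~~ is_anc T v y -> y \in X).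
  move=> v; case vv: (valid T v); last by exists [::].
  have [X [h1 _ h3]] := HU v vv; exists X; split => // _; exact: h3.
pose Xf v := proj1_sig (constructive_indefinite_description _ (HX v)).
have HXf : forall v, size (Xf v) <= t /\ (valid T v -> forall x y, adj x y ->
    x.1 != y.1 -> is_anc T v x -> ~~ is_anc T v y -> y \in Xf v).
  move=> v; exact: (proj2_sig (constructive_indefinite_description _ (HX v))).
pose Xs v := [seq y <- Xf v | y.1 < v.1].
have HXs : forall v, size (Xs v) <= t.
  move=> v; rewrite size_filter; exact: leq_trans (count_size _ _) (HXf v).1.
have HXd : forall v y, y \in Xs v -> y.1 < v.1 by move=> v y; rewrite mem_filter => /andP[].
have HXp : forall v, valid T v -> forall x y, adj x y -> x.1 != y.1 ->
    is_anc T v x -> ~~ is_anc T v y -> y.1 < v.1 -> y \in Xs v.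
  move=> v vv x y a h1 h2 h3 h4; rewrite mem_filter h4 /=; exact: (HXf v).2 vv x y a h1 h2 h3.
pose D := 5 * R0 t.
pose Kb := 2 * R0 t.
exists (D + Kb) => S allS.
pose V := seq_sub S.
pose e := induced adj S.
have vV : forall x : V, valid T (ssval x).
  by move=> x; apply: (allP allS); exact: ssvalP.
pose f m j i := fun x : V => key T adj Xs m j i (ssval x).
pose Good m j i := chain e (Pk (f m j i)) (D + Kb).
have red : forall m j i, inv T m j i -> red_maxdeg_le e (Pk (f m j i)) D.
  move=> m j i hinv.
  apply: (Pk_red (cand := cand T Xs m j)); last by move=> k; exact: (size_cand T HXs m j k).
  move=> u v u' v' Euv Eu'v' nE a1 a2.
  apply: cand_mem; last exact: key_rk.
  exact: (redlem HW Hn HXp hinv (vV u) (vV v) (vV u') (vV v') Euv Eu'v' nE a1 a2).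
have step : forall m j i m' j' i' (L : seq Key), Good m' j' i' -> inv T m' j' i' ->
    (forall x y, valid T x -> valid T y -> key T adj Xs m j i x = key T adj Xs m j i y ->
        key T adj Xs m' j' i' x = key T adj Xs m' j' i' y) ->
    (forall x, valid T x -> key T adj Xs m j i x \notin L -> forall y, valid T y ->
        (key T adj Xs m' j' i' x == key T adj Xs m' j' i' y) = (key T adj Xs m j i x == key T adj Xs m j i y)) ->
    size L <= Kb -> Good m j i.
  move=> m j i m' j' i' L G' hinv c1 c2 hs.
  apply: (chain_step (g := f m' j' i') (L := L)) => //; first exact: red.
    by move=> x y E; apply: c1 => //; apply: vV.
  by move=> x nx y; apply: c2 => //; apply: vV.
have X00 : Xs (0, 0) = [::].
  case E: (Xs (0, 0)) => [|y s] //; have := HXd (0, 0) y; rewrite E inE eqxx => /(_ isT).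
  by rewrite ltn0.
have final : forall x, valid T x -> key T adj Xs 0 0 0 x = ((1, (0, 0)), [::]).
  move=> x vx; rewrite /key /= subn0.
  have ha : anc_pos T x.1 x.2 x.1 = 0.
    have := anc_valid vx (leqnn x.1); rewrite subnn lsize_root; by case: (anc_pos _ _ _ _).
  by rewrite ha /own /guard /= X00.
have GA0 : forall m, Good m 0 0.
  elim=> [|m IH].
    apply: chain_le1; apply: Pk_const => x y; by rewrite /f !final.
  have m0 : 0 < m.+1 by [].
  have GB : forall k, k <= lsize T m -> Good m.+1 (lsize T m.+1) (lsize T m - k).
    elim=> [|k IHk] hk.
      rewrite subn0 /Good.
      have -> : Pk (f m.+1 (lsize T m.+1) (lsize T m)) = Pk (f m 0 0).
        by apply: Pk_ext => x; rewrite /f (bridge adj Xs m0 (vV x)).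
      exact: IH.
    have Ei : (lsize T m - k.+1).+1 = lsize T m - k by lia.
    have G' := IHk (ltnW hk); rewrite -Ei in G'.
    have [c1 c2 c3] := stepB_ok HXs HXd HXp (lsize T m - k.+1) m0.
    by apply: (step _ _ _ _ _ _ _ G' (inv_B _ _ m0) c1 c2).
  have GA : forall k, k <= lsize T m.+1 -> Good m.+1 (lsize T m.+1 - k) 0.
    elim=> [|k IHk] hk.
      rewrite subn0; have := GB (lsize T m) (leqnn _); by rewrite subnn.
    have Ej : (lsize T m.+1 - k.+1).+1 = lsize T m.+1 - k by lia.
    have G' := IHk (ltnW hk); rewrite -Ej in G'.
    have [c1 c2 c3] := stepA_ok HXs HXd HXp (lsize T m.+1 - k.+1) m0.
    by apply: (step _ _ _ _ _ _ _ G' (inv_A _ _ m0) c1 c2).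
  have := GA (lsize T m.+1) (leqnn _); by rewrite subnn.
pose N := foldr (fun x n => maxn x.1 n) 0 S.
have hN : forall x, x \in S -> x.1 <= N.
  rewrite /N; elim: (S) => [|y s IH] x //; rewrite inE => /orP[/eqP ->|/IH h] /=.
    exact: leq_maxl.
  exact: leq_trans h (leq_maxr _ _).
have Einj : Pk (f N.+1 0 0) = [set [set x] | x : V].
  apply: Pk_inj => x y; rewrite /f /key.
  have hx := hN _ (ssvalP x); have hy := hN _ (ssvalP y).
  have nx : (N.+1 <= (ssval x).1) = false by rewrite ltnNge hx.
  have ny : (N.+1 <= (ssval y).1) = false by rewrite ltnNge hy.
  rewrite nx ny !ltn0 !andbF => -[E].
  exact: val_inj.
have [ps [sz h0 hm hr]] := GA0 N.+1.
exists ps; split => //.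
- rewrite sz Einj card_imset ?cardsT //; exact: set1_inj.
- by move=> hp; rewrite h0 // Einj.
Qed.
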